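(* Let $k$ be a field, $G$ an ordered abelian group, and $K=k((G))$ the generalized power series field with its canonical valuation $v$. Let $D$ be a derivation on $K$ whose field of constants $\{a\in K\mid Da=0\}$ is $k$ (embedded as the constant series), and suppose $v$ is a differential valuation with respect to $D$. Then $(K,D)$ admits integration if and only if it admits asymptotic integration.
   Context: For a field $k$ and ordered abelian group $G$, $k((G))$ is the field of formal sums $a=\sum_{g\in G}c_gt^g$ with $c_g\in k$ and well-ordered support $\mathrm{supp}(a)=\{g\mid c_g\neq0\}$; its canonical valuation is $va=\min\mathrm{supp}(a)$, $v0=\infty$. A derivation $D$ on a field $K$ is an additive map with $D(ab)=aDb+bDa$; its field of constants is $C=\{a\in K\mid Da=0\}$. A valuation $v$ of $K$ is a differential valuation (for $D$) if $v$ is trivial on $C$ and for all $a,b\in K$ with $va\ge0$, $vb>0$, $b\ne0$ one has $v\!\left(\frac{b\,Da}{Db}\right)>0$. $(K,D)$ admits integration if $D:K\to K$ is surjective; it admits asymptotic integration if for every $b\in K\setminus\{0\}$ there is $a\in K$ with $v(b-Da)>vb$. *)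

(* Defs.v *)
From HB Require Import structures.
From mathcomp Require Import all_boot all_order all_algebra.
From mathcomp Require Import boolp classical_sets fsbigop.
From Stdlib Require Import ClassicalEpsilon.
Set Implicit Arguments. Unset Strict Implicit. Unset Printing Implicit Defensive.
Import Order.TTheory GRing.Theory Num.Theory.
Local Open Scope ring_scope.

Section Hahn.
Variables (k : fieldType) (G : zmodType) (le : rel G).

Definition ordered_abgroup : Prop :=
  [/\ (forall x, le x x),
      (forall x y, le x y -> le y x -> x = y),
      (forall x y z, le x y -> le y z -> le x z),
      (forall x y, le x y \/ le y x) &
      (forall x y z, le x y -> le (x + z) (y + z))].

Definition lt (x y : G) : Prop := le x y /\ x <> y.

(* elements of k((G)) are represented as coefficient functions G -> k *)
Definition supp (a : G -> k) : set G := [set g | a g != 0].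

Definition well_ordered (S : set G) : Prop :=
  forall T : set G, (T `<=` S)%classic -> (exists t, T t) ->
    exists m, T m /\ forall t, T t -> le m t.

Definition hahn (a : G -> k) : Prop := well_ordered (supp a).

Definition hzero : G -> k := fun _ => 0.
Definition hconst (c : k) : G -> k := fun g => if g == 0 then c else 0.
Definition hone : G -> k := hconst 1.
Definition hadd (a b : G -> k) : G -> k := fun g => a g + b g.
Definition hopp (a : G -> k) : G -> k := fun g => - a g.
Definition hsub (a b : G -> k) : G -> k := hadd a (hopp b).
(* (ab)_g = sum_{x + y = g} a_x b_y; finitely supported for hahn a, b *)
Definition hmul (a b : G -> k) : G -> k :=
  fun g => \sum_(x \in [set: G]) (a x * b (g - x)).
(* multiplicative inverse in k((G)) (0 for a = 0) *)
Definition hinv (a : G -> k) : G -> k :=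
  epsilon (inhabits hzero) (fun c => hahn c /\ hmul a c = hone).

(* canonical valuation: v a = min supp a, v 0 = infinity (None) *)
Definition hval (a : G -> k) : option G :=
  epsilon (inhabits None) (fun o => match o with
    | Some g => a g != 0 /\ forall h, a h != 0 -> le g h
    | None => forall h, a h = 0 end).

Definition vlt (x y : option G) : Prop :=
  match x, y with
  | Some a, Some b => lt a b
  | Some _, None => True
  | None, _ => False
  end.
Definition vle (x y : option G) : Prop :=
  match x, y with
  | Some a, Some b => le a b
  | _, None => True
  | None, Some _ => False
  end.

Definition derivation (D : (G -> k) -> (G -> k)) : Prop :=
  [/\ (forall a, hahn a -> hahn (D a)),
      (forall a b, hahn a -> hahn b -> D (hadd a b) = hadd (D a) (D b)) &
      (forall a b, hahn a -> hahn b ->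
         D (hmul a b) = hadd (hmul a (D b)) (hmul b (D a)))].

Definition constants_are_k (D : (G -> k) -> (G -> k)) : Prop :=
  forall a, hahn a -> (D a = hzero <-> exists c : k, a = hconst c).

Definition differential_valuation (D : (G -> k) -> (G -> k)) : Prop :=
  (forall a, hahn a -> D a = hzero -> a <> hzero -> hval a = Some 0) /\
  (forall a b, hahn a -> hahn b -> vle (Some 0) (hval a) ->
     vlt (Some 0) (hval b) -> b <> hzero ->
     vlt (Some 0) (hval (hmul (hmul b (D a)) (hinv (D b))))).

Definition admits_integration (D : (G -> k) -> (G -> k)) : Prop :=
  forall b, hahn b -> exists a, hahn a /\ D a = b.

Definition admits_asymptotic_integration (D : (G -> k) -> (G -> k)) : Prop :=
  forall b, hahn b -> b <> hzero ->
    exists a, hahn a /\ vlt (hval b) (hval (hsub b (D a))).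

End Hahn.

(* Main.v *)
Require Import Defs.
From HB Require Import structures.
From mathcomp Require Import all_boot all_order all_algebra.
From mathcomp Require Import boolp classical_sets fsbigop cardinality.
From Stdlib Require Import ClassicalEpsilon.
Set Implicit Arguments. Unset Strict Implicit. Unset Printing Implicit Defensive.
Import Order.TTheory GRing.Theory Num.Theory.
Local Open Scope ring_scope.

Section Ord.
Variables (G : zmodType) (le : rel G).
Hypothesis Hord : ordered_abgroup le.

Lemma ole_refl' x : le x x. Proof. by case: Hord. Qed.
Lemma ole_anti x y : le x y -> le y x -> x = y. Proof. by case: Hord => _ H *; apply: H. Qed.
Lemma ole_trans' x y z : le x y -> le y z -> le x z. Proof. by case: Hord => _ _ H _ _ h1 h2; exact: H h1 h2. Qed.
Lemma ole_total x y : le x y \/ le y x. Proof. by case: Hord. Qed.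
Lemma ole_addr x y z : le x y -> le (x + z) (y + z). Proof. by case: Hord => _ _ _ _ H; apply: H. Qed.
Lemma ole_addl x y z : le x y -> le (z + x) (z + y).
Proof. by move=> h; rewrite ![z + _]addrC; apply: ole_addr. Qed.
Lemma ole_addrE x y z : le (x + z) (y + z) = le x y.
Proof.
apply/idP/idP; last exact: ole_addr.
by move=> /(ole_addr (- z)); rewrite !addrK.
Qed.
Lemma ole_addlE x y z : le (z + x) (z + y) = le x y.
Proof. by rewrite ![z + _]addrC ole_addrE. Qed.
Lemma ole_add x y z w : le x y -> le z w -> le (x + z) (y + w).
Proof. move=> h1 h2; apply: (ole_trans' (ole_addr z h1)); exact: ole_addl. Qed.
Lemma ole_opp x y : le x y -> le (- y) (- x).
Proof. move=> h; have := ole_addr (- x - y) h.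
have -> : x + (- x - y) = - y by rewrite addrA subrr add0r.
by have -> : y + (- x - y) = - x by rewrite addrC -addrA addNr addr0. Qed.
Lemma olt_def x y : lt le x y <-> le x y /\ x <> y. Proof. by []. Qed.
Lemma onot_le x y : ~ le x y -> lt le y x.
Proof. move=> h; split; first by case: (ole_total x y).
by move=> e; apply: h; rewrite e ole_refl'. Qed.
Lemma olt_not_le x y : lt le x y -> ~ le y x.
Proof. by case=> h1 h2 h3; apply: h2; apply: ole_anti. Qed.
Lemma olt_le_trans x y z : lt le x y -> le y z -> lt le x z.
Proof. case=> h1 h2 h3; split; first exact: ole_trans' h3.
by move=> e; subst; apply: h2; apply: ole_anti. Qed.
Lemma ole_lt_trans x y z : le x y -> lt le y z -> lt le x z.
Proof. move=> h1 [h2 h3]; split; first exact: ole_trans' h2.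
by move=> e; subst; apply: h3; apply: ole_anti. Qed.
Lemma olt_trans' x y z : lt le x y -> lt le y z -> lt le x z.
Proof. by move=> h [h2 _]; apply: olt_le_trans h h2. Qed.
Lemma olt_irr x : ~ lt le x x. Proof. by case. Qed.
Lemma olt_addr x y z : lt le x y -> lt le (x + z) (y + z).
Proof. by case=> h1 h2; split; [apply: ole_addr|move/addIr]. Qed.
Lemma olt_addl x y z : lt le x y -> lt le (z + x) (z + y).
Proof. by move=> h; rewrite ![z + _]addrC; apply: olt_addr. Qed.
Lemma olt_add x y z w : lt le x y -> le z w -> lt le (x + z) (y + w).
Proof. move=> h1 h2; apply: (olt_le_trans (olt_addr z h1)); exact: ole_addl. Qed.
Lemma ole_lt_add x y z w : le x y -> lt le z w -> lt le (x + z) (y + w).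
Proof. move=> h1 h2; apply: (ole_lt_trans (ole_addr z h1)); exact: olt_addl. Qed.
Lemma olt_total x y : lt le x y \/ x = y \/ lt le y x.
Proof. case: (pselect (x = y)) => [->|ne]; first by right; left.
case: (ole_total x y) => h; [left|right;right]; split => //; by move=> e; apply: ne. Qed.
Lemma olt_opp x y : lt le x y -> lt le (- y) (- x).
Proof. by case=> h1 h2; split; [apply: ole_opp|move/oppr_inj => e; apply: h2]. Qed.

End Ord.

Section Basic.
Variables (k : fieldType) (G : zmodType) (le : rel G).
Hypothesis Hord : ordered_abgroup le.

Definition mono (c : k) (g : G) : G -> k := fun h => if h == g then c else 0.
Definition isval (a : G -> k) g := a g != 0 /\ forall h, a h != 0 -> le g h.

Lemma hahn_sub (a b : G -> k) : hahn le a -> (forall g, b g != 0 -> a g != 0) -> hahn le b.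
Proof. move=> ha sub T TS ne; apply: ha => // t /TS; exact: sub. Qed.

Lemma hahn_U (a b c : G -> k) : hahn le a -> hahn le b ->
  (forall g, c g != 0 -> a g != 0 \/ b g != 0) -> hahn le c.
Proof.
move=> ha hb sub T TS [t Tt].
pose TA : set G := fun x => T x /\ a x != 0; pose TB : set G := fun x => T x /\ b x != 0.
have hA : (exists x, TA x) -> exists m, TA m /\ forall t, TA t -> le m t.
  by move=> ne; apply: ha => // x [].
have hB : (exists x, TB x) -> exists m, TB m /\ forall t, TB t -> le m t.
  by move=> ne; apply: hb => // x [].
case: (pselect (exists x, TA x)) => eA; case: (pselect (exists x, TB x)) => eB.
- case: (hA eA) => m1 [[T1 _] H1]; case: (hB eB) => m2 [[T2 _] H2].
  case: (ole_total Hord m1 m2) => h.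
  + exists m1; split => // u Tu; case: (sub u (TS u Tu)) => hu.
      by apply: H1; split.
    exact: (ole_trans' Hord h (H2 u (conj Tu hu))).
  + exists m2; split => // u Tu; case: (sub u (TS u Tu)) => hu.
      exact: (ole_trans' Hord h (H1 u (conj Tu hu))).
    by apply: H2; split.
- case: (hA eA) => m1 [[T1 _] H1]; exists m1; split => // u Tu.
  case: (sub u (TS u Tu)) => hu; first by apply: H1; split.
  by exfalso; apply: eB; exists u.
- case: (hB eB) => m1 [[T1 _] H1]; exists m1; split => // u Tu.
  case: (sub u (TS u Tu)) => hu; last by apply: H1; split.
  by exfalso; apply: eA; exists u.
- exfalso; case: (sub t (TS t Tt)) => hu; [apply: eA|apply: eB]; by exists t.
Qed.

Lemma hahn0 : hahn le (@hzero k G). Proof. by move=> T TS [t /TS]; rewrite /supp /= /hzero eqxx. Qed.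

Lemma hahn_mono c g : hahn le (mono c g).
Proof.
move=> T TS [t Tt]; exists t; split => // u Tu.
move: (TS u Tu) (TS t Tt); rewrite /supp /mono /=.
case: (u =P g) => [->|_]; last by rewrite eqxx.
by case: (t =P g) => [->|_]; [rewrite ole_refl'|rewrite eqxx].
Qed.

Lemma hahn_const (c : k) : hahn le (@hconst k G c). Proof. exact: hahn_mono. Qed.

Lemma hahn_add (a b : G -> k) : hahn le a -> hahn le b -> hahn le (hadd a b).
Proof.
move=> ha hb; apply: hahn_U ha hb _ => g; rewrite /hadd.
case: (eqVneq (a g) 0) => [->|]; last by left.
by rewrite add0r; right.
Qed.

Lemma hahn_opp (a : G -> k) : hahn le a -> hahn le (hopp a).
Proof. by move=> ha; apply: hahn_sub ha _ => g; rewrite /hopp oppr_eq0. Qed.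

Lemma hahn_sub' (a b : G -> k) : hahn le a -> hahn le b -> hahn le (hsub a b).
Proof. by move=> ha hb; apply: hahn_add => //; apply: hahn_opp. Qed.

Lemma hahn_shift (a : G -> k) c g : hahn le a -> hahn le (fun h => c * a (h + g)).
Proof.
move=> ha T TS [t Tt].
pose T' : set G := fun x => T (x - g).
have [m [Tm Hm]] : exists m, T' m /\ forall t, T' t -> le m t.
  apply: ha; last by exists (t + g); rewrite /T' /= addrK.
  move=> x /TS; rewrite /supp /= subrK.
  by case: (eqVneq (a x) 0) => [->|//]; rewrite mulr0 eqxx.
exists (m - g); split => // u Tu.
have := Hm (u + g); rewrite /T' /= addrK => /(_ Tu).
by move=> hh; rewrite -(ole_addrE Hord _ _ g) subrK.
Qed.

Lemma hval_some (a : G -> k) g : isval a g -> hval le a = Some g.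
Proof.
move=> [ag hg]; rewrite /hval.
set P := fun o : option G => _.
have : P (epsilon (inhabits None) P).
  by apply: epsilon_spec; exists (Some g).
case: (epsilon _ _) => [g'|] /=.
  by move=> [ag' hg']; congr Some; exact: (ole_anti Hord (hg' _ ag) (hg _ ag')).
by move=> h; move: ag; rewrite h eqxx.
Qed.

Lemma hval_none (a : G -> k) : (forall h, a h = 0) -> hval le a = None.
Proof.
move=> h0; rewrite /hval; set P := fun o : option G => _.
have : P (epsilon (inhabits None) P) by apply: epsilon_spec; exists None.
by case: (epsilon _ _) => [g'|] //= [] ; rewrite h0 eqxx.
Qed.

Lemma hval0 : hval le (@hzero k G) = None. Proof. exact: hval_none. Qed.

Lemma hahn_min (a : G -> k) : hahn le a -> (exists h, a h != 0) -> exists g, isval a g.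
Proof.
move=> ha [h ah]; have [m [Sm Hm]] : exists m, supp a m /\ forall t, supp a t -> le m t by apply: ha => //; exists h.
by exists m; split.
Qed.

Lemma hvalP (a : G -> k) : hahn le a ->
  (a = @hzero k G /\ hval le a = None) \/ exists g, isval a g /\ hval le a = Some g.
Proof.
move=> ha; case: (pselect (exists h, a h != 0)) => e.
  by have [g hg] := hahn_min ha e; right; exists g; split => //; apply: hval_some.
have h0 : forall h, a h = 0.
  by move=> h; apply: contra_notP e => ne; exists h; apply/eqP.
by left; split; [apply: funext|apply: hval_none].
Qed.

Lemma hval_Some (a : G -> k) g : hahn le a -> hval le a = Some g -> isval a g.
Proof. by move=> /hvalP [[_ ->]//|[g' [hg ->]]] [<-]. Qed.

Lemma hval_None (a : G -> k) : hahn le a -> hval le a = None -> a = @hzero k G.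
Proof. by move=> /hvalP [[->]//|[g' [hg ->]]]. Qed.

End Basic.

Section Seqs.
Variables (G : zmodType) (le : rel G).
Hypothesis Hord : ordered_abgroup le.

Lemma wo_nodesc (S : set G) : well_ordered le S -> forall f : nat -> G,
  (forall n, S (f n)) -> ~ (forall n, lt le (f n.+1) (f n)).
Proof.
move=> wS f Sf dec.
have [m [[n _ <-] Hm]] : exists m, (range f) m /\ forall t, (range f) t -> le m t.
  apply: wS; last by exists (f 0%N); exists 0%N.
  by move=> x [n _ <-].
by apply: (olt_not_le Hord (dec n)); apply: Hm; exists n.+1.
Qed.

Lemma wo_subseq (S : set G) : well_ordered le S -> forall f : nat -> G,
  (forall n, S (f n)) -> exists s : nat -> nat,
    (forall i, (s i < s i.+1)%N) /\ forall i, le (f (s i)) (f (s i.+1)).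
Proof.
move=> wS f Sf.
pose P j n := (j < n)%N /\ forall m, (j < m)%N -> le (f n) (f m).
have exP : forall j, exists n, P j n.
  move=> j.
  have [v [[n jn <-] Hv]] : exists v, (f @` [set n | (j < n)%N])%classic v /\
     forall t, (f @` [set n | (j < n)%N])%classic t -> le v t.
    apply: wS; last by exists (f j.+1); apply: imageP => /=.
    by move=> x [n _ <-].
  exists n; split => // m jm; apply: Hv; by exists m.
pose am j := epsilon (inhabits 0%N) (P j).
have amP j : P j (am j) by apply: epsilon_spec.
pose tau := fix tau i := if i is i'.+1 then am (tau i') else 0%N.
exists (fun i => tau i.+1); split => i /=.
  by case: (amP (tau i.+1)).
case: (amP (tau i)) => h1 h2; apply: h2.
case: (amP (tau i.+1)) => h3 _; exact: ltn_trans h1 h3.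
Qed.

Lemma desc_lt (t : nat -> G) : (forall n, lt le (t n.+1) (t n)) ->
  forall n m, (n < m)%N -> lt le (t m) (t n).
Proof.
move=> dec n m; elim: m => // m IH; rewrite ltnS leq_eqVlt => /orP [/eqP ->|/IH h].
  exact: dec.
exact: (olt_trans' Hord (dec m) h).
Qed.

Lemma wo_add (A B : set G) : well_ordered le A -> well_ordered le B ->
  well_ordered le (fun x => exists a b, A a /\ B b /\ x = a + b).
Proof.
move=> wA wB T TS [t0 Tt0].
apply: contrapT => nomin.
have nx : forall s, T s -> exists s', T s' /\ lt le s' s.
  move=> s Ts; apply: contrapT => h; apply: nomin; exists s; split => // u Tu.
  apply: contrapT => nle; apply: h; exists u; split => //; exact: (onot_le Hord).
pose nxt s := epsilon (inhabits 0) (fun s' => T s' /\ lt le s' s).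
pose t := fix t n := if n is n'.+1 then nxt (t n') else t0.
have tT : forall n, T (t n) /\ (forall m, n = m.+1 -> lt le (t n) (t m)).
  elim=> [|n [Tn _]]; first by split => // m.
  have := @epsilon_spec _ (inhabits 0) (fun s' => T s' /\ lt le s' (t n)) (nx _ Tn).
  by move=> [h1 h2]; split => // m [<-].
have dec : forall n, lt le (t n.+1) (t n) by move=> n; case: (tT n.+1) => _; apply.
pose dc n := epsilon (inhabits (0, 0)) (fun p => A p.1 /\ B p.2 /\ t n = p.1 + p.2).
have dcP : forall n, A (dc n).1 /\ B (dc n).2 /\ t n = (dc n).1 + (dc n).2.
  move=> n; apply: (@epsilon_spec _ _ (fun p => A p.1 /\ B p.2 /\ t n = p.1 + p.2)).
  case: (TS _ (proj1 (tT n))) => a [b [Aa [Bb e]]]; by exists (a, b).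
have [s [sinc sle]] := wo_subseq wA (f:=fun n => (dc n).1) (fun n => proj1 (dcP n)).
apply: (wo_nodesc wB (f := fun i => (dc (s i)).2)).
  by move=> i; case: (dcP (s i)) => _ [].
move=> i /=; apply: (onot_le Hord) => hle.
have := desc_lt dec (sinc i).
case: (dcP (s i)) => _ [_ ->]; case: (dcP (s i.+1)) => _ [_ ->].
move=> /(olt_not_le Hord); apply; exact: (ole_add Hord (sle i) hle).
Qed.

Lemma wo_finite (S : set G) :
  (forall T, (T `<=` S)%classic -> (exists t, T t) -> exists m, T m /\ forall t, T t -> le m t) ->
  (forall T, (T `<=` S)%classic -> (exists t, T t) -> exists m, T m /\ forall t, T t -> le t m) ->
  finite_set S.
Proof.
move=> wmin wmax.
case: (pselect (exists s, S s)) => [[s0 Ss0]|ne]; last first.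
  by apply: (sub_finite_set _ (finite_set0 G)) => x Sx; apply: ne; exists x.
pose MIN T := epsilon (inhabits 0) (fun m => T m /\ forall t, T t -> le m t).
have MINP : forall T, (T `<=` S)%classic -> (exists t, T t) ->
    T (MIN T) /\ forall t, T t -> le (MIN T) t.
  by move=> T TS ne; apply: (@epsilon_spec _ _ (fun m => T m /\ forall t, T t -> le m t)); apply: wmin.
pose U x : set G := fun s => S s /\ lt le x s.
have US : forall x, (U x `<=` S)%classic by move=> x y [].
pose f := fix f n := if n is n'.+1 then
   (if pselect (exists s, U (f n') s) then MIN (U (f n')) else f n') else MIN S.
have f0 : S (f 0%N) /\ forall t, S t -> le (f 0%N) t.
  by apply: MINP => //; exists s0.
have fS : forall n, S (f n).
  elim=> [|n IH] //=; first by case: f0.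
  by case: pselect => [e|//]; case: (MINP _ (US (f n)) e) => -[].
have [n nn] : exists n, ~ exists s, U (f n) s.
  apply: contrapT => h.
  have inc : forall n, lt le (f n) (f n.+1).
    move=> n /=; case: pselect => [e|e]; last by exfalso; apply: h; exists n.
    by case: (MINP _ (US (f n)) e) => -[].
  have [M [[m _ <-] HM]] : exists M, (range f) M /\ forall t, (range f) t -> le t M.
    apply: wmax; last by exists (f 0%N), 0%N.
    by move=> x [m _ <-].
  by apply: (olt_not_le Hord (inc m)); apply: HM; exists m.+1.
have cover : forall i s, S s -> le s (f i) -> exists j, (j <= i)%N /\ s = f j.
  elim=> [|i IH] s Ss hs.
    exists 0%N; split => //; apply: (ole_anti Hord hs); by case: f0 => _; apply.
  case: (pselect (le s (f i))) => h.
    by case: (IH s Ss h) => j [ji ->]; exists j; split => //; apply: leqW.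
  have ui : U (f i) s by split => //; apply: (onot_le Hord).
  exists i.+1; split => //.
  move: hs => /=; case: pselect => [e|e]; last by exfalso; apply: e; exists s.
  case: (MINP _ (US (f i)) e) => _ hm hs.
  exact: (ole_anti Hord hs (hm _ ui)).
apply: (sub_finite_set _ (finite_seq [seq f j | j <- iota 0 n.+1])) => s Ss.
have hs : le s (f n).
  apply: contrapT => h; apply: nn; exists s; split => //; exact: (onot_le Hord).
case: (cover n s Ss hs) => j [jn ->] /=.
change (f j \in [seq f j | j <- iota 0 n.+1]); apply: map_f; by rewrite mem_iota add0n ltnS.
Qed.

End Seqs.

Section Mul.
Variables (k : fieldType) (G : zmodType) (le : rel G).
Hypothesis Hord : ordered_abgroup le.
Local Notation hz := (@hzero k G).

Definition vadd (x y : option G) : option G :=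
  match x, y with Some a, Some b => Some (a + b) | _, _ => None end.

Lemma conv_finite (a b : G -> k) g : hahn le a -> hahn le b ->
  finite_set (fun x => a x != 0 /\ b (g - x) != 0).
Proof.
move=> ha hb; apply: (wo_finite Hord).
  by move=> T TS ne; apply: ha => // x /TS [].
move=> T TS [t Tt].
pose T' : set G := fun y => T (g - y).
have [m [Tm Hm]] : exists m, T' m /\ forall t, T' t -> le m t.
  apply: hb; last by exists (g - t); rewrite /T' opprB addrC subrK.
  by move=> y /TS [_]; rewrite /supp /= opprB addrC subrK.
exists (g - m); split => // u Tu.
have := Hm (g - u); rewrite /T' opprB addrC subrK => /(_ Tu) h.
have h3 := ole_addr Hord g (ole_opp Hord h).
by move: h3; rewrite opprB subrK addrC.
Qed.

Lemma hmul_supp (a b : G -> k) g : hmul a b g != 0 -> exists x, a x != 0 /\ b (g - x) != 0.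
Proof.
move=> h; apply: contrapT => nh; move: h; rewrite /hmul fsbig1 ?eqxx // => x _.
apply/eqP; apply: contraT => nz; exfalso; apply: nh; exists x.
by split; apply/eqP => e; move: nz; rewrite e ?mul0r ?mulr0 eqxx.
Qed.

Lemma hahn_mul (a b : G -> k) : hahn le a -> hahn le b -> hahn le (hmul a b).
Proof.
move=> ha hb T TS ne; apply: (wo_add Hord ha hb) => // x /TS /hmul_supp [y [h1 h2]].
by exists y, (x - y); split => //; split => //; rewrite addrC subrK.
Qed.

Lemma hmul_coef0 (a b : G -> k) al be h : (forall x, a x != 0 -> le al x) ->
  (forall x, b x != 0 -> le be x) -> lt le h (al + be) -> hmul a b h = 0.
Proof.
move=> Ha Hb hlt; apply: fsbig1 => x _.
case: (eqVneq (a x) 0) => [->|ax]; first by rewrite mul0r.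
case: (eqVneq (b (h - x)) 0) => [->|bx]; first by rewrite mulr0.
exfalso; apply: (olt_not_le Hord hlt).
have := ole_add Hord (Ha _ ax) (Hb _ bx); by rewrite [x + _]addrC subrK.
Qed.

Lemma hmul_coef (a b : G -> k) al be : (forall x, a x != 0 -> le al x) ->
  (forall x, b x != 0 -> le be x) -> hmul a b (al + be) = a al * b be.
Proof.
move=> Ha Hb; rewrite /hmul -(fsbig_widen [set al]%classic) //.
  by rewrite fsbig_set1 [al + be]addrC addrK.
move=> x [_ /= nx]; rewrite /preimage /=.
case: (eqVneq (a x) 0) => [->|ax]; first by rewrite mul0r.
case: (eqVneq (b (al + be - x)) 0) => [->|bx]; first by rewrite mulr0.
exfalso; apply: nx; apply: esym; apply: (ole_anti Hord (Ha _ ax)).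
have h := ole_addr Hord x (Hb _ bx).
by move: h; rewrite subrK [be + x]addrC (ole_addrE Hord).
Qed.

Lemma hmul_monoR (a : G -> k) c g h : hmul a (mono c g) h = a (h - g) * c.
Proof.
rewrite /hmul -(fsbig_widen [set h - g]%classic) //.
  rewrite fsbig_set1 /mono; have -> : h - (h - g) = g by rewrite opprB addrC subrK.
  by rewrite eqxx.
move=> x [_ /= nx]; rewrite /preimage /= /mono.
case: eqP => [e|]; last by rewrite mulr0.
by exfalso; apply: nx; rewrite -e opprB addrC subrK.
Qed.

Lemma hmul_monoL (a : G -> k) c g h : hmul (mono c g) a h = c * a (h - g).
Proof.
rewrite /hmul -(fsbig_widen [set g]%classic) //.
  by rewrite fsbig_set1 /mono eqxx.
move=> x [_ /= nx]; rewrite /preimage /= /mono.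
by case: eqP => [e|]; [exfalso; apply: nx|rewrite mul0r].
Qed.

Lemma hmul0r (a : G -> k) : hmul a hz = hz.
Proof. by apply: funext => g; apply: fsbig1 => x _; rewrite /hzero mulr0. Qed.

Lemma hmul_scal (a : G -> k) c : hmul (hconst c) a = (fun h => c * a h).
Proof. by apply: funext => h; rewrite (hmul_monoL a c 0 h) subr0. Qed.

Lemma hmul_addr (a b c : G -> k) : hahn le a -> hahn le b -> hahn le c ->
  hmul a (hadd b c) = hadd (hmul a b) (hmul a c).
Proof.
move=> ha hb hc; apply: funext => g; rewrite /hmul /hadd.
pose P : set G := ((fun x => a x != 0 /\ b (g - x) != 0) `|`
                  (fun x => a x != 0 /\ c (g - x) != 0))%classic.
have finP : finite_set P by rewrite /P finite_setU; split; apply: conv_finite.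
have wid : forall F : G -> k, (forall x, ~ P x -> F x = 0) ->
   \sum_(x \in [set: G]%classic) F x = \sum_(x \in P) F x.
  move=> F HF; apply/esym/fsbig_widen => // x [_ nP]; exact: HF.
have zb x : ~ P x -> a x * b (g - x) = 0.
  move=> nP; case: (eqVneq (a x) 0) => [->|ax]; first by rewrite mul0r.
  case: (eqVneq (b (g - x)) 0) => [->|bx]; first by rewrite mulr0.
  by exfalso; apply: nP; left.
have zc x : ~ P x -> a x * c (g - x) = 0.
  move=> nP; case: (eqVneq (a x) 0) => [->|ax]; first by rewrite mul0r.
  case: (eqVneq (c (g - x)) 0) => [->|bx]; first by rewrite mulr0.
  by exfalso; apply: nP; right.
rewrite (wid _ zb) (wid _ zc) wid; last by move=> x nP; rewrite mulrDr zb ?zc ?addr0.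
rewrite -fsbig_split //; apply: eq_fsbigr => x _; by rewrite mulrDr.
Qed.

Lemma isval_mul (a b : G -> k) al be : isval le a al -> isval le b be ->
  isval le (hmul a b) (al + be).
Proof.
move=> [a0 Ha] [b0 Hb]; split; first by rewrite hmul_coef // mulf_neq0.
move=> h nh; apply: contrapT => nle; move: nh; rewrite (hmul_coef0 Ha Hb) ?eqxx //.
exact: (onot_le Hord).
Qed.

Lemma hval_mul (a b : G -> k) : hahn le a -> hahn le b ->
  hval le (hmul a b) = vadd (hval le a) (hval le b).
Proof.
move=> ha hb; case: (hvalP Hord ha) => [[-> ->]|[al [va ->]]].
  rewrite /= hval_none // => h; apply: fsbig1 => x _; by rewrite /hzero mul0r.
case: (hvalP Hord hb) => [[-> ->]|[be [vb ->]]].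
  by rewrite hmul0r hval0.
by rewrite /= (hval_some Hord (isval_mul va vb)).
Qed.

End Mul.

Section Lim.
Variables (k : fieldType) (G : zmodType) (le : rel G).
Hypothesis Hord : ordered_abgroup le.
Local Notation hz := (@hzero k G).
Local Notation hahn := (hahn le).

Lemma limit (L : (G -> k) -> G -> Prop) :
  (forall y y' s t, hahn y -> hahn y' -> le s t -> L y t -> L y' s -> L y s) ->
  (forall y1 y2 g, hahn y1 -> hahn y2 -> L y1 g -> L y2 g -> y1 g = y2 g) ->
  exists x, hahn x /\ forall y g, hahn y -> L y g -> x g = y g.
Proof.
move=> H1 H2.
pose ch g := epsilon (inhabits hz) (fun y => hahn y /\ L y g).
pose x g := if pselect (exists y, hahn y /\ L y g) then ch g g else 0.
have chP : forall g, (exists y, hahn y /\ L y g) -> hahn (ch g) /\ L (ch g) g.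
  by move=> g e; apply: (@epsilon_spec _ _ (fun y => hahn y /\ L y g)).
have xP : forall y g, hahn y -> L y g -> x g = y g.
  move=> y g hy Ly; rewrite /x; case: pselect => [e|e]; last by exfalso; apply: e; exists y.
  by case: (chP g e) => h1 h2; apply: H2.
have xS : forall g, x g != 0 -> exists y, hahn y /\ L y g.
  move=> g nz; apply: contrapT => ne; move: nz; rewrite /x /=; destruct (pselect (exists y, hahn y /\ L y g)) as [e|e]; [by exfalso; apply: ne|by rewrite /= eqxx].
exists x; split => // T TS [t Tt].
have [y [hy Ly]] := xS t (TS t Tt).
pose T' : set G := fun s => T s /\ le s t.
have [m [[Tm mt] Hm]] : exists m, T' m /\ forall u, T' u -> le m u.
  apply: (hy); last by exists t; split => //; apply: ole_refl'.
  move=> s [Ts st]; have [y' [hy' Ly']] := xS s (TS s Ts).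
  have Lys : L y s by exact: (H1 y y' s t hy hy' st Ly Ly').
  by rewrite /supp /= -(xP _ _ hy Lys); apply: TS.
exists m; split => // u Tu; case: (ole_total Hord u t) => h.
  by apply: Hm; split.
exact: (ole_trans' Hord mt h).
Qed.

Lemma isval_hone : isval le (@hone k G) 0.
Proof.
split; first by rewrite /hone /hconst eqxx oner_eq0.
move=> h; rewrite /hone /hconst; case: (h =P 0) => [->|_]; first by rewrite ole_refl'.
by rewrite eqxx.
Qed.

Lemma inv_exists (p : G -> k) : hahn p -> p <> hz -> exists c, hahn c /\ hmul p c = @hone k G.
Proof.
move=> hp pnz.
have [vp [pvp Hp]] : exists vp, isval le p vp.
  apply: (hahn_min hp); apply: contrapT => h; apply: pnz; apply: funext => g.
  by apply/eqP; apply: contraT => ng; exfalso; apply: h; exists g.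
apply: contrapT => nex.
pose err y := hsub (@hone k G) (hmul p y).
have herr : forall y, hahn y -> hahn (err y).
  by move=> y hy; apply: hahn_sub' => //; [apply: hahn_const|apply: hahn_mul].
have errv : forall y, hahn y -> exists e, isval le (err y) e.
  move=> y hy; apply: (hahn_min (herr y hy)); apply: contrapT => h.
  apply: nex; exists y; split => //; apply: funext => g.
  have : err y g = 0 by apply/eqP; apply: contraT => ng; exfalso; apply: h; exists g.
  by rewrite /err /hsub /hadd /hopp => /eqP; rewrite subr_eq0 => /eqP <-.
have errD : forall y z, hahn y -> hahn z -> err (hadd y z) = hsub (err y) (hmul p z).
  move=> y z hy hz'; rewrite /err (hmul_addr Hord) //; apply: funext => g.
  by rewrite /hsub /hadd /hopp opprD addrA.
have improve : forall y e, hahn y -> isval le (err y) e ->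
    exists y', hahn y' /\ forall h, err y' h != 0 -> lt le e h.
  move=> y e hy [re He].
  pose m := mono ((p vp)^-1 * err y e) (e - vp).
  have hm : hahn m by apply: hahn_mono.
  exists (hadd y m); split; first by apply: hahn_add.
  move=> h; rewrite errD // /hsub /hadd /hopp hmul_monoR.
  move=> nz; apply: contrapT => nlt; move: nz; apply/negP; rewrite negbK; apply/eqP.
  case: (pselect (h = e)) => [->|ne].
    have -> : e - (e - vp) = vp by rewrite opprB addrC subrK.
    by rewrite mulrA mulfV // mul1r subrr.
  have ltm : lt le h e.
    split => //; case: (ole_total Hord h e) => // eh; exfalso; apply: nlt; split => //.
    by move=> q; apply: ne.
  have -> : err y h = 0.
    by apply/eqP; apply: contraT => nz; exfalso; apply: (olt_not_le Hord ltm); apply: He.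
  have -> : p (h - (e - vp)) = 0.
    apply/eqP; apply: contraT => nz; exfalso.
    have := Hp _ nz; apply: (olt_not_le Hord).
    have := olt_addr Hord (vp - e) ltm.
    have -> : e + (vp - e) = vp by rewrite addrCA subrr addr0.
    by rewrite opprB.
  by rewrite mul0r oppr0 addr0.
pose L y h := exists e, isval le (err y) e /\ lt le (h + vp) e.
have key : forall y1 y2 e1 e2 g, hahn y1 -> hahn y2 -> isval le (err y1) e1 ->
    isval le (err y2) e2 -> le e1 e2 -> lt le (g + vp) e1 -> y1 g = y2 g.
  move=> y1 y2 e1 e2 g hy1 hy2 [_ H1] [_ H2] e12 lt1.
  apply/eqP; apply: contraT => ne; exfalso.
  pose z := hsub y2 y1.
  have hz' : hahn z by apply: hahn_sub'.
  have [ze zv] : exists ze, isval le z ze.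
    by apply: (hahn_min hz'); exists g; rewrite /z /hsub /hadd /hopp subr_eq0 eq_sym.
  have zg : le ze g by case: zv => _; apply; rewrite /z /hsub /hadd /hopp subr_eq0 eq_sym.
  have y2E : y2 = hadd y1 z.
    by apply: funext => h; rewrite /z /hadd /hsub /hopp addrC subrK.
  have : err y2 = hsub (err y1) (hmul p z) by rewrite y2E errD.
  move=> E.
  have pz : isval le (hmul p z) (vp + ze) by apply: isval_mul.
  case: pz => pz0 _.
  have ltz : lt le (vp + ze) e1.
    apply: (ole_lt_trans Hord _ lt1); rewrite addrC; exact: ole_addr.
  have : err y1 (vp + ze) != 0 \/ err y2 (vp + ze) != 0.
    case: (eqVneq (err y1 (vp + ze)) 0) => e0; last by left.
    right; rewrite E /hsub /hadd /hopp e0 add0r oppr_eq0 //.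
  case=> nz; apply: (olt_not_le Hord ltz).
    by apply: H1.
  exact: (ole_trans' Hord e12 (H2 _ nz)).
have [x [hx xP]] : exists x, hahn x /\ forall y g, hahn y -> L y g -> x g = y g.
  apply: limit.
    move=> y y' s t hy hy' st [e [ev lte]] _; exists e; split => //.
    apply: (ole_lt_trans Hord _ lte); exact: ole_addr.
  move=> y1 y2 g hy1 hy2 [e1 [v1 l1]] [e2 [v2 l2]].
  case: (ole_total Hord e1 e2) => h.
    exact: (key y1 y2 e1 e2).
  apply: esym; exact: (key y2 y1 e2 e1).
have xbest : forall y e, hahn y -> isval le (err y) e -> forall h, err x h != 0 -> le e h.
  move=> y e hy [ye He] h.
  pose z := hsub x y.
  have hz' : hahn z by apply: hahn_sub'.
  have xE : x = hadd y z by apply: funext => g; rewrite /z /hadd /hsub /hopp addrC subrK.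
  rewrite xE errD // /hsub /hadd /hopp.
  case: (eqVneq (err y h) 0) => [->|]; last by move=> nz _; apply: He.
  rewrite add0r oppr_eq0 => nz.
  have [ze zv] : exists ze, isval le z ze.
    apply: (hahn_min hz'); apply: contrapT => hh; move: nz.
    rewrite (_ : z = hz) ?hmul0r ?eqxx //; apply: funext => g.
    by apply/eqP; apply: contraT => ng; exfalso; apply: hh; exists g.
  have [_ Hpz] := isval_mul Hord (conj pvp Hp) zv.
  apply: (ole_trans' Hord _ (Hpz _ nz)).
  case: zv => zz _; apply: contrapT => nle.
  have Lz : L y ze by exists e; split => //; rewrite addrC; apply: (onot_le Hord).
  by move: zz; rewrite /z /hsub /hadd /hopp (xP y ze hy Lz) subrr eqxx.
have [ex vx] := errv x hx.
have [x' [hx' Hx']] := improve x ex hx vx.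
have [ex' [vx'0 vx']] := errv x' hx'.
have lt1 := Hx' _ vx'0.
have := xbest x' ex' hx' (conj vx'0 vx') ex (proj1 vx).
exact: (olt_not_le Hord lt1).
Qed.

Lemma hinv_spec (p : G -> k) : hahn p -> p <> hz ->
  hahn (hinv le p) /\ hmul p (hinv le p) = @hone k G.
Proof.
move=> hp nz; rewrite /hinv.
by apply: (@epsilon_spec _ _ (fun c => hahn c /\ hmul p c = @hone k G)); apply: inv_exists.
Qed.

Lemma hval_hinv (p : G -> k) g : hahn p -> hval le p = Some g ->
  hahn (hinv le p) /\ hval le (hinv le p) = Some (- g).
Proof.
move=> hp vg.
have nz : p <> hz by move=> e; move: vg; rewrite e hval0.
have [hc hm] := hinv_spec hp nz; split => //.
have := hval_mul Hord hp hc; rewrite hm (hval_some Hord isval_hone) vg.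
case: (hval le (hinv le p)) => //= g' [e]; congr Some.
by rewrite -[RHS]addr0 e addKr.
Qed.

End Lim.

Section Gen.
Variables (k : fieldType) (G : zmodType) (le : rel G).
Hypothesis Hord : ordered_abgroup le.
Local Notation hz := (@hzero k G).
Local Notation hahn := (hahn le).
Local Notation isval := (isval le).

Lemma isval_uniq (a : G -> k) e e' : isval a e -> isval a e' -> e = e'.
Proof. by move=> [a1 H1] [a2 H2]; apply: (ole_anti Hord (H1 _ a2) (H2 _ a1)). Qed.

Lemma isval_add_gt (A B : G -> k) e : isval B e -> (forall h, A h != 0 -> lt le e h) ->
  isval (hadd A B) e.
Proof.
move=> [b0 Hb] HA; split.
  rewrite /hadd; case: (eqVneq (A e) 0) => [->|ne]; first by rewrite add0r.
  by case: (olt_irr (HA _ ne)).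
move=> h; rewrite /hadd; case: (eqVneq (A h) 0) => [->|ne]; first by rewrite add0r; apply: Hb.
by move=> _; case: (HA _ ne).
Qed.

Lemma isval_mono (c : k) g : c != 0 -> isval (mono c g) g.
Proof.
move=> c0; split; first by rewrite /mono eqxx.
by move=> h; rewrite /mono; case: (h =P g) => [->|_]; [rewrite ole_refl'|rewrite eqxx].
Qed.

Lemma hval_gt (X : G -> k) e : hahn X -> vlt le (Some e) (hval le X) ->
  forall h, X h != 0 -> lt le e h.
Proof.
move=> hX; case: (hvalP Hord hX) => [[-> _]|[e' [[_ H] ->]]].
  by move=> _ h; rewrite /hzero eqxx.
by move=> /= lt1 h nz; apply: (olt_le_trans Hord lt1); apply: H.
Qed.

Lemma isval_opp_eq (X Y : G -> k) e e' : (forall h, X h = - Y h) ->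
  isval X e -> isval Y e' -> e = e'.
Proof.
move=> E vX [y0 HY]; apply: (isval_uniq vX); split; first by rewrite E oppr_eq0.
by move=> h; rewrite E oppr_eq0; apply: HY.
Qed.

Lemma mono_mul (g h : G) : hmul (mono (1 : k) g) (mono 1 h) = mono 1 (g + h).
Proof.
apply: funext => x; rewrite hmul_monoL mul1r /mono subr_eq addrC //.
Qed.

End Gen.

Section Diff.
Variables (k : fieldType) (G : zmodType) (le : rel G).
Hypothesis Hord : ordered_abgroup le.
Variable D : (G -> k) -> (G -> k).
Hypothesis Hder : derivation le D.
Hypothesis Hconst : constants_are_k le D.
Hypothesis Hdv : differential_valuation le D.
Local Notation hz := (@hzero k G).
Local Notation hahn := (hahn le).
Local Notation isval := (isval le).
Local Notation m1 := (mono (1 : k)).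
Let hC (c : k) : hahn (hconst c) := @hahn_const k G le Hord c.
Let hM (c : k) g : hahn (mono c g) := @hahn_mono k G le Hord c g.
Arguments hC c : clear implicits.
Arguments hM c g : clear implicits.

Lemma hahnD a : hahn a -> hahn (D a). Proof. by case: Hder => H _ _; apply: H. Qed.
Lemma Dadd a b : hahn a -> hahn b -> D (hadd a b) = hadd (D a) (D b).
Proof. by case: Hder => _ H _; apply: H. Qed.
Lemma Dmul a b : hahn a -> hahn b -> D (hmul a b) = hadd (hmul a (D b)) (hmul b (D a)).
Proof. by case: Hder => _ _ H; apply: H. Qed.
Lemma Dconst (c : k) : D (hconst c) = hz.
Proof. by apply: (proj2 (Hconst (hC c))); exists c. Qed.
Lemma D0 : D hz = hz.
Proof.
have e : hz = hconst 0 by apply: funext => h; rewrite /hconst /hzero; case: eqP.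
rewrite {1}e; exact: Dconst.
Qed.
Lemma Dsub a b : hahn a -> hahn b -> D (hsub a b) = hsub (D a) (D b).
Proof.
move=> ha hb.
have hnb : hahn (hopp b) by apply: hahn_opp.
have e1 : D (hadd b (hopp b)) = hz.
  rewrite (_ : hadd b (hopp b) = hz) ?D0 //.
  by apply: funext => h; rewrite /hadd /hopp subrr.
rewrite Dadd // in e1.
rewrite /hsub Dadd //; congr hadd; apply: funext => h.
have := congr1 (fun f => f h) e1; rewrite /hadd /hzero /hopp => /eqP.
by rewrite addr_eq0 => /eqP ->; rewrite opprK.
Qed.
Lemma Dscal (c : k) a : hahn a -> D (fun h => c * a h) = (fun h => c * D a h).
Proof.
move=> ha; have e : (fun h => c * a h) = hmul (hconst c) a by rewrite hmul_scal.
rewrite e Dmul //.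
rewrite Dconst hmul0r hmul_scal; apply: funext => h; by rewrite /hadd /hzero addr0.
Qed.

Lemma Dmono_nz g : g != 0 -> D (m1 g) <> hz.
Proof.
move=> g0 e; have := (Hconst (hM 1 g)).1 e; case=> c /(congr1 (fun f => f g)).
rewrite /mono /hconst eqxx (negbTE g0) => /eqP; by rewrite oner_eq0.
Qed.

Lemma phi_ex g : g != 0 -> exists f, isval (D (m1 g)) f.
Proof.
move=> g0; apply: hahn_min; first by apply: hahnD; apply: hM.
apply: contrapT => h; apply: (Dmono_nz g0); apply: funext => x.
by apply/eqP; apply: contraT => nx; exfalso; apply: h; exists x.
Qed.

Lemma AX s fs a d : lt le 0 s -> isval (D (m1 s)) fs -> hahn a ->
  (forall h, a h != 0 -> le 0 h) -> isval (D a) d -> lt le 0 (s + d - fs).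
Proof.
move=> s0 vfs ha apos vd.
have hb : hahn (m1 s) by apply: hM.
have vb : hval le (m1 s) = Some s by apply: (hval_some Hord); apply: (isval_mono Hord); apply: oner_neq0.
have hDb : hahn (D (m1 s)) by apply: hahnD.
have [hi vi] := hval_hinv Hord hDb (hval_some Hord vfs).
have bnz : m1 s <> hz.
  move=> e; move: vb; rewrite e hval0 //.
have va : vle le (Some 0) (hval le a).
  case: (hvalP Hord ha) => [[_ ->]//|[g [[ag _] ->]]] /=; exact: apos.
have := (Hdv.2 a (m1 s) ha hb va); rewrite vb => /(_ s0 bnz).
have hDa : hahn (D a) by apply: hahnD.
rewrite (hval_mul Hord) //; last by apply: hahn_mul.
by rewrite (hval_mul Hord hb hDa) vb vi (hval_some Hord vd).
Qed.

Lemma Rel g f f' : g != 0 -> isval (D (m1 g)) f -> isval (D (m1 (- g))) f' ->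
  g + f' = - g + f.
Proof.
move=> g0 vf vf'.
have e := @mono_mul k G g (- g); rewrite subrr in e.
have := congr1 D e; rewrite Dmul ?hM //.
have -> : D (m1 0) = hz by apply: Dconst.
move=> E.
apply: (isval_opp_eq Hord (X := hmul (m1 g) (D (m1 (- g)))) (Y := hmul (m1 (- g)) (D (m1 g)))).
- move=> h; have e0 := congr1 (fun F => F h) E; rewrite /hadd /hzero in e0.
  by apply/eqP; rewrite -addr_eq0 e0.
- apply: (isval_mul Hord) => //; exact: (isval_mono Hord _ (oner_neq0 k)).
- apply: (isval_mul Hord) => //; exact: (isval_mono Hord _ (oner_neq0 k)).
Qed.

Lemma K g f a : g != 0 -> isval (D (m1 g)) f -> hahn a ->
  (forall h, a h != 0 -> le 0 h) -> forall h, hmul (m1 g) (D a) h != 0 -> lt le f h.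
Proof.
move=> g0 vf ha apos h; rewrite hmul_monoL mul1r => nz.
have hDa : hahn (D a) by apply: hahnD.
have [d [d0 Hd]] : exists d, isval (D a) d.
  by apply: hahn_min => //; exists (h - g).
suff lf : lt le f (g + d).
  apply: (olt_le_trans Hord lf); have := ole_addl Hord g (Hd _ nz).
  by rewrite [g + (h - g)]addrC subrK.
case: (olt_total Hord 0 g) => [gp|[e|gn]].
- have := AX gp vf ha apos (conj d0 Hd) => h1.
  have := olt_addr Hord f h1; by rewrite add0r subrK.
- by move: g0; rewrite -e eqxx.
- have gp : lt le 0 (- g) by have := olt_opp Hord gn; rewrite oppr0.
  have [f' vf'] : exists f', isval (D (m1 (- g))) f' by apply: phi_ex; rewrite oppr_eq0.
  have R := Rel g0 vf vf'.
  have h1 := AX gp vf' ha apos (conj d0 Hd).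
  have := olt_addr Hord (g + f') h1.
  have -> : - g + d - f' + (g + f') = d.
    by rewrite [g + f']addrC addrA subrK addrC addNKr.
  rewrite add0r => h2; have := olt_addl Hord g h2.
  by rewrite R addNKr.
Qed.

End Diff.

Section Diff2.
Variables (k : fieldType) (G : zmodType) (le : rel G).
Hypothesis Hord : ordered_abgroup le.
Variable D : (G -> k) -> (G -> k).
Hypothesis Hder : derivation le D.
Hypothesis Hconst : constants_are_k le D.
Hypothesis Hdv : differential_valuation le D.
Local Notation hz := (@hzero k G).
Local Notation hahn := (hahn le).
Local Notation isval := (isval le).
Local Notation m1 := (mono (1 : k)).
Let hC (c : k) : hahn (hconst c) := @hahn_const k G le Hord c.
Let hM (c : k) g : hahn (mono c g) := @hahn_mono k G le Hord c g.
Arguments hC c : clear implicits.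
Arguments hM c g : clear implicits.

Lemma strict_mono g g' f : g != 0 -> lt le g g' -> isval (D (m1 g)) f ->
  forall h, D (m1 g') h != 0 -> lt le f h.
Proof.
move=> g0 gg' vf h.
have e : m1 g' = hmul (m1 g) (m1 (g' - g)) by rewrite mono_mul [g + _]addrC subrK.
have pos : lt le 0 (g' - g).
  by have := olt_addr Hord (- g) gg'; rewrite subrr.
rewrite e (Dmul Hder) ?hM // /hadd.
case: (eqVneq (hmul (m1 g) (D (m1 (g' - g))) h) 0) => [->|nz _]; last first.
  apply: (K Hord Hder Hconst Hdv g0 vf (hM 1 (g' - g)) _ nz).
  by move=> x; rewrite /mono; case: (x =P g' - g) => [->|_]; [case: pos|rewrite eqxx].
rewrite add0r hmul_monoL mul1r => nz.
have := ole_lt_add Hord (proj2 vf _ nz) pos.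
by rewrite addr0 subrK.
Qed.

Lemma weak_mono g g' f f' : g != 0 -> le g g' -> isval (D (m1 g)) f ->
  isval (D (m1 g')) f' -> le f f'.
Proof.
move=> g0 gg' vf vf'; case: (pselect (g = g')) => [e|ne].
  by subst; rewrite (isval_uniq Hord vf vf') ole_refl'.
have := strict_mono g0 (conj gg' ne) vf (proj1 vf'); by case.
Qed.

Lemma val_series z g f : hahn z -> g != 0 -> z g != 0 ->
  (forall h, h != 0 -> z h != 0 -> le g h) -> isval (D (m1 g)) f -> isval (D z) f.
Proof.
move=> hz' g0 zg zmin vf.
pose c := z g.
pose u := hsub z (hconst (z 0)).
have hu : hahn u by apply: (hahn_sub' Hord) => //; apply: hC.
have u0 : u 0 = 0 by rewrite /u /hsub /hadd /hopp /hconst eqxx subrr.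
have uh : forall h, h != 0 -> u h = z h.
  by move=> h h0; rewrite /u /hsub /hadd /hopp /hconst (negbTE h0) oppr0 addr0.
pose w := fun h => c^-1 * u (h + g).
have hw : hahn w by apply: (hahn_shift Hord).
pose dl := hsub w (@hone k G).
have hdl : hahn dl by apply: (hahn_sub' Hord) => //; apply: hC.
pose m := mono c g.
have um : u = hmul m w.
  apply: funext => h; rewrite hmul_monoL /w subrK mulrA mulfV ?mul1r //.
have zE : z = hadd u (hconst (z 0)).
  by apply: funext => h; rewrite /hadd /u /hsub /hadd /hopp subrK.
have Dz : D z = D u.
  rewrite {1}zE (Dadd Hder) ?hC // (Dconst Hord Hconst); apply: funext => h.
  by rewrite /hadd /hzero addr0.
have wE : w = hadd dl (@hone k G).
  by apply: funext => h; rewrite /hadd /dl /hsub /hadd /hopp subrK.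
have Dw : D w = D dl.
  have D1 : D (@hone k G) = hz by apply: (Dconst Hord Hconst).
  rewrite {1}wE (Dadd Hder) ?hC //; last exact: (hC 1).
  rewrite D1; apply: funext => h.
  by rewrite /hadd /hzero addr0.
have mE : m = (fun h => c * m1 g h).
  by apply: funext => h; rewrite /m /mono; case: eqP => _; rewrite ?mulr1 ?mulr0.
have Dm : D m = (fun h => c * D (m1 g) h) by rewrite mE (Dscal Hord Hder Hconst) ?hM.
have vDm : isval (D m) f.
  rewrite Dm; case: vf => f0 Hf; split; first by rewrite mulf_neq0.
  by move=> h; rewrite mulf_eq0 negb_or => /andP [_ /Hf].
have vw : isval w 0.
  split; first by rewrite /w /= add0r (uh _ g0) mulVf // oner_eq0.
  move=> h; rewrite /w /= mulf_eq0 negb_or => /andP [_ nz].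
  have hg0 : h + g != 0 by apply: contraNN nz => /eqP ->; rewrite u0.
  have := zmin _ hg0; rewrite -(uh _ hg0) => /(_ nz).
  by rewrite -{1}[g]add0r (ole_addrE Hord).
have hDm : hahn (D m) by apply: (hahnD Hder); apply: hM.
have v2 := isval_mul Hord vw vDm; rewrite add0r in v2.
rewrite Dz um (Dmul Hder) ?hM //.
apply: isval_add_gt => // h; rewrite Dw hmul_monoL => nz.
have nz' : hmul (m1 g) (D dl) h != 0.
  by rewrite hmul_monoL mul1r; move: nz; rewrite mulf_eq0 negb_or => /andP [].
apply: (K Hord Hder Hconst Hdv g0 vf hdl _ nz') => x.
rewrite /dl /hsub /hadd /hopp /hone /hconst; case: (x =P 0) => [->|_].
  by rewrite ole_refl'.
by rewrite oppr0 addr0 => /(proj2 vw).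
exact: hM.
Qed.

End Diff2.

Section Main.
Variables (k : fieldType) (G : zmodType) (le : rel G).
Hypothesis Hord : ordered_abgroup le.
Variable D : (G -> k) -> (G -> k).
Hypothesis Hder : derivation le D.
Hypothesis Hconst : constants_are_k le D.
Hypothesis Hdv : differential_valuation le D.
Local Notation hz := (@hzero k G).
Local Notation hahn := (hahn le).
Local Notation isval := (isval le).
Local Notation m1 := (mono (1 : k)).

Lemma nlt_le x y : ~ lt le x y -> le y x.
Proof.
move=> h; case: (ole_total Hord y x) => // yx; case: (pselect (x = y)) => [->|ne].
  exact: ole_refl'.
by exfalso; apply: h.
Qed.

Lemma mu_ex (z : G -> k) : hahn z -> (exists h, h != 0 /\ z h != 0) ->
  exists g, [/\ g != 0, z g != 0 & forall h, h != 0 -> z h != 0 -> le g h].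
Proof.
move=> hz' [h [h0 zh]].
have [m [[m0 zm] Hm]] : exists m, (fun x => x != 0 /\ z x != 0) m /\
    forall t, (fun x => x != 0 /\ z x != 0) t -> le m t.
  by apply: (hz'); [move=> x [] | exists h].
by exists m; split => // x x0 zx; apply: Hm.
Qed.

Lemma const_case (z : G -> k) : ~ (exists h, h != 0 /\ z h != 0) -> D z = hz.
Proof.
move=> nh.
have -> : z = hconst (z 0).
  apply: funext => h; rewrite /hconst; case: (h =P 0) => [->//|/eqP h0].
  by apply/eqP; apply: contraT => nz; exfalso; apply: nh; exists h.
exact: (Dconst Hord Hconst).
Qed.

Lemma Zfwd (z : G -> k) e : hahn z -> (forall x, D z x != 0 -> le e x) ->
  forall h f, h != 0 -> isval (D (m1 h)) f -> lt le f e -> z h = 0.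
Proof.
move=> hz' He h f h0 vf lfe; apply/eqP; apply: contraT => zh; exfalso.
have [g [g0 zg gmin]] := mu_ex hz' (ex_intro _ h (conj h0 zh)).
have [fg vfg] := phi_ex Hord Hder Hconst g0.
have vz := val_series Hord Hder Hconst Hdv hz' g0 zg gmin vfg.
have efg := He _ (proj1 vz).
have := weak_mono Hord Hder Hconst Hdv g0 (gmin _ h0 zh) vfg vf.
move=> fgf; apply: (olt_not_le Hord lfe); exact: (ole_trans' Hord efg fgf).
Qed.

Lemma Zbwd (z : G -> k) e : hahn z ->
  (forall h f, h != 0 -> isval (D (m1 h)) f -> lt le f e -> z h = 0) ->
  forall x, D z x != 0 -> le e x.
Proof.
move=> hz' Hz x; case: (pselect (exists h, h != 0 /\ z h != 0)) => [ex|nex]; last first.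
  by rewrite const_case // /hzero eqxx.
have [g [g0 zg gmin]] := mu_ex hz' ex.
have [fg vfg] := phi_ex Hord Hder Hconst g0.
have [_ vz] := val_series Hord Hder Hconst Hdv hz' g0 zg gmin vfg.
move=> nz; apply: (ole_trans' Hord _ (vz _ nz)); apply: nlt_le => lt1.
by move: zg; rewrite (Hz g fg g0 vfg lt1) eqxx.
Qed.

Lemma hard (b : G -> k) : hahn b -> admits_asymptotic_integration le D ->
  exists a, hahn a /\ D a = b.
Proof.
move=> hb Hasy; apply: contrapT => nex.
pose err a := hsub b (D a).
have herr : forall a, hahn a -> hahn (err a).
  by move=> a ha; apply: (hahn_sub' Hord) => //; apply: (hahnD Hder).
have errv : forall a, hahn a -> exists e, isval (err a) e.
  move=> a ha; apply: (hahn_min (herr a ha)); apply: contrapT => h.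
  apply: nex; exists a; split => //; apply: funext => g.
  have : err a g = 0 by apply/eqP; apply: contraT => ng; exfalso; apply: h; exists g.
  by rewrite /err /hsub /hadd /hopp => /eqP; rewrite subr_eq0 => /eqP <-.
have errD : forall a c, hahn a -> hahn c -> err (hadd a c) = hsub (err a) (D c).
  move=> a c ha hc; rewrite /err (Dadd Hder) //; apply: funext => g.
  by rewrite /hsub /hadd /hopp opprD addrA.
have improve : forall a e, hahn a -> isval (err a) e ->
    exists a', hahn a' /\ forall h, err a' h != 0 -> lt le e h.
  move=> a e ha ve.
  have enz : err a <> hz by move=> E; move: (proj1 ve); rewrite E /hzero eqxx.
  have [c [hc Hc]] := Hasy _ (herr a ha) enz.
  exists (hadd a c); split; first exact: (hahn_add Hord).
  rewrite errD //; apply: (hval_gt Hord).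
    by apply: (hahn_sub' Hord) => //; [apply: herr|apply: (hahnD Hder)].
  by rewrite -(hval_some Hord ve).
pose L a h := h != 0 /\ exists e f, [/\ isval (err a) e, isval (D (m1 h)) f & lt le f e].
have key : forall y1 y2 e1 e2 g f, hahn y1 -> hahn y2 -> isval (err y1) e1 ->
    isval (err y2) e2 -> le e1 e2 -> g != 0 -> isval (D (m1 g)) f -> lt le f e1 ->
    y1 g = y2 g.
  move=> y1 y2 e1 e2 g f hy1 hy2 [_ H1] [_ H2] e12 g0 vf lt1.
  pose z := hsub y2 y1.
  have hz' : hahn z by apply: (hahn_sub' Hord).
  have Dz : forall x, D z x = err y1 x - err y2 x.
    move=> x; rewrite /z (Dsub Hord Hder Hconst) // /err /hsub /hadd /hopp.
    have -> : b x - D y1 x - (b x - D y2 x) = D y2 x - D y1 x by rewrite opprB addrC addrA subrK.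
    by [].
  have zg : z g = 0.
    apply: (Zfwd hz' (e := e1) _ g0 vf lt1) => x; rewrite Dz => nz.
    case: (eqVneq (err y1 x) 0) => [e0|]; last by move/H1.
    move: nz; rewrite e0 add0r oppr_eq0 => /H2; exact: (ole_trans' Hord e12).
  by move: zg; rewrite /z /hsub /hadd /hopp => /eqP; rewrite subr_eq0 => /eqP ->.
have [x [hx xP]] : exists x, hahn x /\ forall y g, hahn y -> L y g -> x g = y g.
  apply: (limit Hord).
    move=> y y' s t hy hy' st [t0 [e [ft [ve vft lt1]]]] [s0 [e' [fs [_ vfs _]]]].
    split => //; exists e, fs; split => //.
    exact: (ole_lt_trans Hord (weak_mono Hord Hder Hconst Hdv s0 st vfs vft) lt1).
  move=> y1 y2 g hy1 hy2 [g0 [e1 [f1 [v1 vf1 l1]]]] [_ [e2 [f2 [v2 vf2 l2]]]].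
  case: (ole_total Hord e1 e2) => h.
    exact: (key y1 y2 e1 e2 g f1).
  apply: esym; exact: (key y2 y1 e2 e1 g f2).
have xbest : forall y e, hahn y -> isval (err y) e -> forall h, err x h != 0 -> le e h.
  move=> y e hy [ye He] h.
  pose z := hsub x y.
  have hz' : hahn z by apply: (hahn_sub' Hord).
  have xE : x = hadd y z by apply: funext => g; rewrite /z /hadd /hsub /hopp addrC subrK.
  rewrite xE errD // /hsub /hadd /hopp.
  case: (eqVneq (err y h) 0) => [->|]; last by move=> nz _; apply: He.
  rewrite add0r oppr_eq0; apply: (Zbwd hz') => g f g0 vf lt1.
  have Lg : L y g by split => //; exists e, f.
  by rewrite /z /hsub /hadd /hopp (xP y g hy Lg) subrr.
have [ex vx] := errv x hx.
have [x' [hx' Hx']] := improve x ex hx vx.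
have [ex' [vx'0 vx']] := errv x' hx'.
have lt1 := Hx' _ vx'0.
have := xbest x' ex' hx' (conj vx'0 vx') ex (proj1 vx).
exact: (olt_not_le Hord lt1).
Qed.

End Main.

Theorem mainTheorem6 (k : fieldType) (G : zmodType) (le : rel G)
  (D : (G -> k) -> (G -> k)) :
  ordered_abgroup le ->
  derivation le D ->
  constants_are_k le D ->
  differential_valuation le D ->
  (admits_integration le D <-> admits_asymptotic_integration le D).
Proof.
move=> Hord Hder Hconst Hdv; split.
  move=> Hint b hb bnz; have [a [ha Da]] := Hint b hb.
  exists a; split => //.
  have -> : hsub b (D a) = @hzero k G by apply: funext => g; rewrite Da /hsub /hadd /hopp subrr.
  rewrite hval0; case: (hvalP Hord hb) => [[e _]|[g [_ ->]]] //.
by move=> Hasy b hb; apply: (hard Hord Hder Hconst Hdv hb Hasy).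
Qed.
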